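(* Consider Configuration II (two agents in mutual beacon-referenced pursuit of a single beacon at the origin, $b=0$) with parameters $\mu>0$, $\lambda\in(0,1)$, $a\in[-1,1]$ and $a_0\in[-1,1]\setminus\{0\}$. (a) If $(1-\lambda)a+\lambda a_0<0$, a circling equilibrium exists with $$\bar x_1=\bar x_2=0,\ \bar x_{1b1}=\bar x_{2b2}=0,\ \tilde x=-1,\ \rho_{1b1}=\rho_{2b2}=\frac{1}{-\mu\bigl((1-\lambda)a+\lambda a_0\bigr)},\ \rho=2\rho_{1b1}.$$ (b) If $(1-\lambda)a+\lambda a_0<0$, $a_0<0$ and $a>0$, a circling equilibrium exists with $$\bar x_1=\bar x_2=0,\ \bar x_{1b1}=\bar x_{2b2}=0,\ \tilde x=1,\ \rho_{1b1}=\rho_{2b2}=\frac{\lambda a_0}{\mu\bigl((1-\lambda)^2a^2-\lambda^2a_0^2\bigr)},\ \rho=\frac{-2(1-\lambda)a}{\mu\bigl((1-\lambda)^2a^2-\lambda^2a_0^2\bigr)}.$$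
   Context: Two-agent setup: beacons $\mathbf r_{b1}=(0,0,-b)$, $\mathbf r_{b2}=(0,0,b)$ with $b\ge0$, $\hat{\mathbf b}=\mathbf r_{b2}-\mathbf r_{b1}=(0,0,2b)$. Agents $i=1,2$ have positions $\mathbf r_i\in\mathbb R^3$ and unit velocities $\mathbf x_i$. Let $\mathbf r=\mathbf r_1-\mathbf r_2$, $\mathbf r_{1b1}=\mathbf r_1-\mathbf r_{b1}$, $\mathbf r_{2b2}=\mathbf r_2-\mathbf r_{b2}$, $\rho=|\mathbf r|$, $\rho_{1b1}=|\mathbf r_{1b1}|$, $\rho_{2b2}=|\mathbf r_{2b2}|$, $\bar x_1=\mathbf x_1\cdot\mathbf r/\rho$, $\bar x_2=-\mathbf x_2\cdot\mathbf r/\rho$, $\bar x_{1b1}=\mathbf x_1\cdot\mathbf r_{1b1}/\rho_{1b1}$, $\bar x_{2b2}=\mathbf x_2\cdot\mathbf r_{2b2}/\rho_{2b2}$, $\tilde x=\mathbf x_1\cdot\mathbf x_2$, $\hat r_i=\mathbf r_i\cdot\hat{\mathbf b}$, $\hat x_i=\mathbf x_i\cdot\hat{\mathbf b}$. With gain $\mu>0$, weight $\lambda\in(0,1)$, common agent-bearing parameter $a\in[-1,1]$ and common beacon-bearing parameter $a_0\in[-1,1]$, the closed-loop dynamics are $\dot{\mathbf r}_i=\mathbf x_i$ and $$\dot{\mathbf x}_1=-(1-\lambda)\mu(\bar x_1-a)\Bigl(\tfrac{\mathbf r}{\rho}-\bar x_1\mathbf x_1\Bigr)-\lambda\mu(\bar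 x_{1b1}-a_0)\Bigl(\tfrac{\mathbf r_{1b1}}{\rho_{1b1}}-\bar x_{1b1}\mathbf x_1\Bigr),$$ $$\dot{\mathbf x}_2=-(1-\lambda)\mu(\bar x_2-a)\Bigl(-\tfrac{\mathbf r}{\rho}-\bar x_2\mathbf x_2\Bigr)-\lambda\mu(\bar x_{2b2}-a_0)\Bigl(\tfrac{\mathbf r_{2b2}}{\rho_{2b2}}-\bar x_{2b2}\mathbf x_2\Bigr).$$ The shape variables $(\bar x_1,\bar x_2,\bar x_{1b1},\bar x_{2b2},\tilde x,\rho,\rho_{1b1},\rho_{2b2},\hat r_1,\hat r_2,\hat x_1,\hat x_2)$ have time derivatives along this flow that depend only on the shape variables. A circling equilibrium is a state with $\rho,\rho_{1b1},\rho_{2b2}>0$ at which the time derivatives of all shape variables vanish. Configuration II is the case $b=0$ (single beacon at the origin, so $\hat{\mathbf b}=\mathbf 0$ and $\hat r_i=\hat x_i=0$). *)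

(* Defs.v *)
From Stdlib Require Import Reals Lra List.
Open Scope R_scope.

Record V3 := mkV { vx : R; vy : R; vz : R }.

Definition vadd (u v : V3) : V3 := mkV (vx u + vx v) (vy u + vy v) (vz u + vz v).
Definition vsub (u v : V3) : V3 := mkV (vx u - vx v) (vy u - vy v) (vz u - vz v).
Definition vscale (c : R) (v : V3) : V3 := mkV (c * vx v) (c * vy v) (c * vz v).
Definition vdot (u v : V3) : R := vx u * vx v + vy u * vy v + vz u * vz v.
Definition vnorm (v : V3) : R := sqrt (vdot v v).

Record State := mkS { sr1 : V3; sr2 : V3; sx1 : V3; sx2 : V3 }.

Definition sadd (s d : State) : State :=
  mkS (vadd (sr1 s) (sr1 d)) (vadd (sr2 s) (sr2 d))
      (vadd (sx1 s) (sx1 d)) (vadd (sx2 s) (sx2 d)).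
Definition sscale (c : R) (s : State) : State :=
  mkS (vscale c (sr1 s)) (vscale c (sr2 s)) (vscale c (sx1 s)) (vscale c (sx2 s)).

Definition rb1 (b : R) : V3 := mkV 0 0 (- b).
Definition rb2 (b : R) : V3 := mkV 0 0 b.
Definition bhat (b : R) : V3 := vsub (rb2 b) (rb1 b).

Definition rrel (s : State) : V3 := vsub (sr1 s) (sr2 s).
Definition r1b1 (b : R) (s : State) : V3 := vsub (sr1 s) (rb1 b).
Definition r2b2 (b : R) (s : State) : V3 := vsub (sr2 s) (rb2 b).

Definition rho (s : State) : R := vnorm (rrel s).
Definition rho1b1 (b : R) (s : State) : R := vnorm (r1b1 b s).
Definition rho2b2 (b : R) (s : State) : R := vnorm (r2b2 b s).
Definition barx1 (s : State) : R := vdot (sx1 s) (rrel s) / rho s.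
Definition barx2 (s : State) : R := - vdot (sx2 s) (rrel s) / rho s.
Definition barx1b1 (b : R) (s : State) : R := vdot (sx1 s) (r1b1 b s) / rho1b1 b s.
Definition barx2b2 (b : R) (s : State) : R := vdot (sx2 s) (r2b2 b s) / rho2b2 b s.
Definition tildex (s : State) : R := vdot (sx1 s) (sx2 s).
Definition hatr1 (b : R) (s : State) : R := vdot (sr1 s) (bhat b).
Definition hatr2 (b : R) (s : State) : R := vdot (sr2 s) (bhat b).
Definition hatx1 (b : R) (s : State) : R := vdot (sx1 s) (bhat b).
Definition hatx2 (b : R) (s : State) : R := vdot (sx2 s) (bhat b).

Definition shape_vars (b : R) : list (State -> R) :=
  barx1 :: barx2 :: barx1b1 b :: barx2b2 b :: tildex :: rho :: rho1b1 b
  :: rho2b2 b :: hatr1 b :: hatr2 b :: hatx1 b :: hatx2 b :: nil.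

Definition xdot1 (mu lam a a0 b : R) (s : State) : V3 :=
  vadd
    (vscale (- (1 - lam) * mu * (barx1 s - a))
       (vsub (vscale (/ rho s) (rrel s)) (vscale (barx1 s) (sx1 s))))
    (vscale (- lam * mu * (barx1b1 b s - a0))
       (vsub (vscale (/ rho1b1 b s) (r1b1 b s)) (vscale (barx1b1 b s) (sx1 s)))).

Definition xdot2 (mu lam a a0 b : R) (s : State) : V3 :=
  vadd
    (vscale (- (1 - lam) * mu * (barx2 s - a))
       (vsub (vscale (- / rho s) (rrel s)) (vscale (barx2 s) (sx2 s))))
    (vscale (- lam * mu * (barx2b2 b s - a0))
       (vsub (vscale (/ rho2b2 b s) (r2b2 b s)) (vscale (barx2b2 b s) (sx2 s)))).

Definition field (mu lam a a0 b : R) (s : State) : State :=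
  mkS (sx1 s) (sx2 s) (xdot1 mu lam a a0 b s) (xdot2 mu lam a a0 b s).

(* Time derivative of a function f of the state along the flow, at state s,
   is the directional derivative of f at s in the direction of the field;
   "f' = 0 at s" is stated as derivable_pt_lim of t |-> f (s + t F(s)) at 0
   with value 0. *)
Definition time_deriv_zero (mu lam a a0 b : R) (f : State -> R) (s : State) : Prop :=
  derivable_pt_lim (fun t => f (sadd s (sscale t (field mu lam a a0 b s)))) 0 0.

Definition circling_equilibrium (mu lam a a0 b : R) (s : State) : Prop :=
  vnorm (sx1 s) = 1 /\ vnorm (sx2 s) = 1 /\
  0 < rho s /\ 0 < rho1b1 b s /\ 0 < rho2b2 b s /\
  Forall (fun f => time_deriv_zero mu lam a a0 b f s) (shape_vars b).

(* Main.v *)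
Require Import Defs.
From Stdlib Require Import Reals Lra List.
From Coquelicot Require Import Coquelicot.
Open Scope R_scope.

Definition aff (u0 u1 : V3) (t : R) : V3 := vadd u0 (vscale t u1).

Lemma D_dot u0 u1 v0 v1 :
  derivable_pt_lim (fun t => vdot (aff u0 u1 t) (aff v0 v1 t)) 0 (vdot u1 v0 + vdot u0 v1).
Proof.
  apply is_derive_Reals. destruct u0, u1, v0, v1. unfold aff, vdot, vadd, vscale; simpl.
  auto_derive; [exact I|]. ring.
Qed.

Lemma D_norm u0 u1 : 0 < vdot u0 u0 ->
  derivable_pt_lim (fun t => vnorm (aff u0 u1 t)) 0 (vdot u0 u1 / vnorm u0).
Proof.
  intro H. apply is_derive_Reals. destruct u0 as [a b c], u1 as [d e f].
  unfold vnorm, aff, vdot, vadd, vscale in *; simpl in *.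
  replace ((a + 0 * d) * (a + 0 * d) + (b + 0 * e) * (b + 0 * e) + (c + 0 * f) * (c + 0 * f))
    with (a*a+b*b+c*c) by ring.
  auto_derive.
  - replace ((a + 0 * d) * (a + 0 * d) + (b + 0 * e) * (b + 0 * e) + (c + 0 * f) * (c + 0 * f))
    with (a*a+b*b+c*c) by ring. exact H.
  - replace ((a + 0 * d) * (a + 0 * d) + (b + 0 * e) * (b + 0 * e) + (c + 0 * f) * (c + 0 * f))
    with (a*a+b*b+c*c) by ring.
    assert (0 < sqrt (a*a+b*b+c*c)) by (apply sqrt_lt_R0; lra).
    field. lra.
Qed.

Lemma D_quot0 (N : R -> R) w0 w1 : 0 < vdot w0 w0 -> N 0 = 0 -> derivable_pt_lim N 0 0 ->
  derivable_pt_lim (fun t => N t / vnorm (aff w0 w1 t)) 0 0.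
Proof.
  intros Hw HN HD.
  assert (Hp : 0 < vnorm w0) by (apply sqrt_lt_R0; exact Hw).
  assert (E: vnorm (aff w0 w1 0) = vnorm w0).
  { destruct w0, w1; unfold aff, vnorm, vdot, vadd, vscale; simpl. f_equal; ring. }
  pose proof (derivable_pt_lim_div N (fun t => vnorm (aff w0 w1 t)) 0 0 _ HD (D_norm w0 w1 Hw)) as H.
  simpl in H. rewrite E, HN in H.
  assert (L : (0 * vnorm w0 - vdot w0 w1 / vnorm w0 * 0) / (vnorm w0)² = 0).
  { unfold Rsqr; field; lra. }
  rewrite L in H. eapply derivable_pt_lim_ext; [|apply H; lra].
  intro z; reflexivity.
Qed.

Section Gen.
Variables (s F : State).
Let P t := sadd s (sscale t F).

Lemma rrel_aff t : rrel (P t) = aff (rrel s) (rrel F) t.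
Proof. destruct s as [[] [] [] []], F as [[] [] [] []]; unfold P, rrel, aff, sadd, sscale, vsub, vadd, vscale; simpl; f_equal; ring. Qed.
Lemma r1b1_aff t : r1b1 0 (P t) = aff (r1b1 0 s) (sr1 F) t.
Proof. destruct s as [[] [] [] []], F as [[] [] [] []]; unfold P, r1b1, rb1, aff, sadd, sscale, vsub, vadd, vscale; simpl; f_equal; ring. Qed.
Lemma r2b2_aff t : r2b2 0 (P t) = aff (r2b2 0 s) (sr2 F) t.
Proof. destruct s as [[] [] [] []], F as [[] [] [] []]; unfold P, r2b2, rb2, aff, sadd, sscale, vsub, vadd, vscale; simpl; f_equal; ring. Qed.

Lemma td_q (g : State -> V3) (h : State -> V3) u1 v1 :
  (forall t, g (P t) = aff (g s) u1 t) -> (forall t, h (P t) = aff (h s) v1 t) ->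
  0 < vdot (h s) (h s) -> vdot (g s) (h s) = 0 -> vdot u1 (h s) + vdot (g s) v1 = 0 ->
  derivable_pt_lim (fun t => vdot (g (P t)) (h (P t)) / vnorm (h (P t))) 0 0.
Proof.
  intros Hg Hh H1 H2 H3.
  eapply derivable_pt_lim_ext.
  2: apply (D_quot0 (fun t => vdot (aff (g s) u1 t) (aff (h s) v1 t)) (h s) v1 H1).
  - intro z. simpl. rewrite Hg, Hh. reflexivity.
  - unfold aff. transitivity (vdot (g s) (h s)); [|exact H2]. destruct (g s), (h s), u1, v1; unfold vdot, vadd, vscale; simpl; ring.
  - pose proof (D_dot (g s) u1 (h s) v1) as D. rewrite H3 in D. exact D.
Qed.

Lemma td_qn (g : State -> V3) (h : State -> V3) u1 v1 :
  (forall t, g (P t) = aff (g s) u1 t) -> (forall t, h (P t) = aff (h s) v1 t) ->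
  0 < vdot (h s) (h s) -> vdot (g s) (h s) = 0 -> vdot u1 (h s) + vdot (g s) v1 = 0 ->
  derivable_pt_lim (fun t => - vdot (g (P t)) (h (P t)) / vnorm (h (P t))) 0 0.
Proof.
  intros Hg Hh H1 H2 H3.
  eapply derivable_pt_lim_ext.
  2: apply (D_quot0 (fun t => - vdot (aff (g s) u1 t) (aff (h s) v1 t)) (h s) v1 H1).
  - intro z. simpl. rewrite Hg, Hh. reflexivity.
  - unfold aff. transitivity (- vdot (g s) (h s)); [|rewrite H2; ring]. destruct (g s), (h s), u1, v1; unfold vdot, vadd, vscale; simpl; ring.
  - pose proof (derivable_pt_lim_opp _ _ _ (D_dot (g s) u1 (h s) v1)) as D. rewrite H3, Ropp_0 in D.
    eapply derivable_pt_lim_ext; [|exact D]. intro z; reflexivity.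
Qed.

Lemma td_n (h : State -> V3) v1 :
  (forall t, h (P t) = aff (h s) v1 t) ->
  0 < vdot (h s) (h s) -> vdot (h s) v1 = 0 ->
  derivable_pt_lim (fun t => vnorm (h (P t))) 0 0.
Proof.
  intros Hh H1 H2.
  replace 0 with (vdot (h s) v1 / vnorm (h s)) at 2 by (rewrite H2; unfold Rdiv; ring).
  eapply derivable_pt_lim_ext.
  2: apply (D_norm (h s) v1 H1).
  intro z. simpl. rewrite Hh. reflexivity.
Qed.

Lemma td_d :
  vdot (sx1 F) (sx2 s) + vdot (sx1 s) (sx2 F) = 0 ->
  derivable_pt_lim (fun t => vdot (sx1 (P t)) (sx2 (P t))) 0 0.
Proof.
  intros H. pose proof (D_dot (sx1 s) (sx1 F) (sx2 s) (sx2 F)) as D. rewrite H in D. exact D.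
Qed.

Lemma td_hat (g : State -> V3) :
  derivable_pt_lim (fun t => vdot (g (P t)) (bhat 0)) 0 0.
Proof.
  eapply derivable_pt_lim_ext.
  2: apply derivable_pt_lim_const with (a := 0).
  intro z. unfold fct_cte, bhat, rb1, rb2, vsub, vdot; simpl. ring.
Qed.
End Gen.



Lemma sqrt_sq' x : 0 <= x -> sqrt (x * x) = x.
Proof. intro; apply sqrt_square; auto. Qed.

Ltac cond := repeat (match goal with H : sx1 _ = vscale _ _ |- _ => rewrite H | H : sx2 _ = vscale _ _ |- _ => rewrite H | H : rrel _ = vsub _ _ |- _ => rewrite H | H : sr1 _ = sx1 _ |- _ => rewrite H | H : sr2 _ = sx2 _ |- _ => rewrite H end);
  unfold vdot, rrel, r1b1, r2b2, rb1, rb2, vsub, vscale; simpl; nra.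

Lemma caseA (mu lam a a0 : R) :
  0 < mu -> 0 < lam < 1 -> (1 - lam) * a + lam * a0 < 0 ->
    exists s : State, circling_equilibrium mu lam a a0 0 s /\
      barx1 s = 0 /\ barx2 s = 0 /\ barx1b1 0 s = 0 /\ barx2b2 0 s = 0 /\
      tildex s = -1 /\
      rho1b1 0 s = 1 / (- mu * ((1 - lam) * a + lam * a0)) /\
      rho2b2 0 s = 1 / (- mu * ((1 - lam) * a + lam * a0)) /\
      rho s = 2 * rho1b1 0 s.
Proof.
  intros Hmu Hlam Hc.
  set (c := (1 - lam) * a + lam * a0) in *.
  set (R0 := 1 / (- mu * c)).
  assert (HR : 0 < R0).
  { unfold R0. apply Rdiv_lt_0_compat; [lra|]. nra. }
  assert (HRc : mu * c * R0 = -1) by (unfold R0; field; nra).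
  set (s := mkS (mkV R0 0 0) (mkV (- R0) 0 0) (mkV 0 1 0) (mkV 0 (-1) 0)).
  assert (Hrho : rho s = 2 * R0).
  { unfold rho, vnorm, rrel, vdot, vsub; simpl.
    replace ((R0 - - R0) * (R0 - - R0) + (0 - 0) * (0 - 0) + (0 - 0) * (0 - 0)) with ((2*R0)*(2*R0)) by ring.
    apply sqrt_sq'; lra. }
  assert (Hr1 : rho1b1 0 s = R0).
  { unfold rho1b1, vnorm, r1b1, rb1, vdot, vsub; simpl.
    replace ((R0 - 0) * (R0 - 0) + (0 - 0) * (0 - 0) + (0 - - 0) * (0 - - 0)) with (R0*R0) by ring.
    apply sqrt_sq'; lra. }
  assert (Hr2 : rho2b2 0 s = R0).
  { unfold rho2b2, vnorm, r2b2, rb2, vdot, vsub; simpl.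
    replace ((- R0 - 0) * (- R0 - 0) + (0 - 0) * (0 - 0) + (0 - 0) * (0 - 0)) with (R0*R0) by ring.
    apply sqrt_sq'; lra. }
  assert (Hb1 : barx1 s = 0).
  { unfold barx1. match goal with |- ?n / _ = 0 => replace n with 0 by (unfold vdot, rrel, vsub; simpl; ring) end.
    unfold Rdiv; ring. }
  assert (Hb2 : barx2 s = 0).
  { unfold barx2. match goal with |- - ?n / _ = 0 => replace n with 0 by (unfold vdot, rrel, vsub; simpl; ring) end.
    unfold Rdiv; ring. }
  assert (Hb1b : barx1b1 0 s = 0).
  { unfold barx1b1. match goal with |- ?n / _ = 0 => replace n with 0 by (unfold vdot, r1b1, rb1, vsub; simpl; ring) end.
    unfold Rdiv; ring. }
  assert (Hb2b : barx2b2 0 s = 0).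
  { unfold barx2b2. match goal with |- ?n / _ = 0 => replace n with 0 by (unfold vdot, r2b2, rb2, vsub; simpl; ring) end.
    unfold Rdiv; ring. }
  exists s.
  set (F := field mu lam a a0 0 s).
  assert (HF1 : sx1 F = vscale (mu * c) (mkV 1 0 0)).
  { unfold F, field, xdot1; simpl sx1. rewrite Hb1, Hb1b, Hrho, Hr1.
    unfold vadd, vscale, vsub, rrel, r1b1, rb1, c; simpl. f_equal; field; lra. }
  assert (HF2 : sx2 F = vscale (mu * c) (mkV (-1) 0 0)).
  { unfold F, field, xdot2; simpl sx2. rewrite Hb2, Hb2b, Hrho, Hr2.
    unfold vadd, vscale, vsub, rrel, r2b2, rb2, c; simpl. f_equal; field; lra. }
  assert (HFr : rrel F = vsub (sx1 s) (sx2 s)) by reflexivity.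
  assert (HF1r : sr1 F = sx1 s) by reflexivity.
  assert (HF2r : sr2 F = sx2 s) by reflexivity.
  assert (Hpos : 0 < R0 * R0) by nra.
  split.
  - unfold circling_equilibrium. split; [|split; [|split; [|split; [|split]]]].
    + unfold vnorm, vdot; simpl. replace (0 * 0 + 1 * 1 + 0 * 0) with 1 by ring. apply sqrt_1.
    + unfold vnorm, vdot; simpl. replace (0 * 0 + -1 * -1 + 0 * 0) with 1 by ring. apply sqrt_1.
    + lra.
    + lra.
    + lra.
    + unfold shape_vars; repeat constructor; unfold time_deriv_zero.
      * unfold barx1, rho. apply (td_q s F sx1 rrel (sx1 F) (rrel F));
          [intro; reflexivity | apply rrel_aff | cond | cond | cond].
      * unfold barx2, rho. apply (td_qn s F sx2 rrel (sx2 F) (rrel F));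
          [intro; reflexivity | apply rrel_aff | cond | cond | cond].
      * unfold barx1b1, rho1b1. apply (td_q s F sx1 (r1b1 0) (sx1 F) (sr1 F));
          [intro; reflexivity | apply r1b1_aff | cond | cond | cond].
      * unfold barx2b2, rho2b2. apply (td_q s F sx2 (r2b2 0) (sx2 F) (sr2 F));
          [intro; reflexivity | apply r2b2_aff | cond | cond | cond].
      * unfold tildex. apply (td_d s F). cond.
      * unfold rho. apply (td_n s F rrel (rrel F)); [apply rrel_aff | cond | cond].
      * unfold rho1b1. apply (td_n s F (r1b1 0) (sr1 F)); [apply r1b1_aff | cond | cond].
      * unfold rho2b2. apply (td_n s F (r2b2 0) (sr2 F)); [apply r2b2_aff | cond | cond].
      * unfold hatr1. apply (td_hat s F sr1).
      * unfold hatr2. apply (td_hat s F sr2).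
      * unfold hatx1. apply (td_hat s F sx1).
      * unfold hatx2. apply (td_hat s F sx2).
  - repeat split; try assumption. unfold tildex, vdot; simpl; ring. rewrite Hrho, Hr1; ring.
Qed.



Lemma sqrt_sq'' x : 0 <= x -> sqrt (x * x) = x.
Proof. intro; apply sqrt_square; auto. Qed.

Ltac condB := repeat (match goal with H : sx1 _ = mkV _ _ _ |- _ => rewrite H | H : sx2 _ = mkV _ _ _ |- _ => rewrite H | H : rrel _ = vsub _ _ |- _ => rewrite H | H : sr1 _ = sx1 _ |- _ => rewrite H | H : sr2 _ = sx2 _ |- _ => rewrite H end);
  unfold vdot, rrel, r1b1, r2b2, rb1, rb2, vsub, vscale; simpl.

Lemma caseB (mu lam a a0 : R) :
  0 < mu -> 0 < lam < 1 -> (1 - lam) * a + lam * a0 < 0 -> a0 < 0 -> 0 < a ->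
    exists s : State, circling_equilibrium mu lam a a0 0 s /\
      barx1 s = 0 /\ barx2 s = 0 /\ barx1b1 0 s = 0 /\ barx2b2 0 s = 0 /\
      tildex s = 1 /\
      rho1b1 0 s = lam * a0 / (mu * ((1 - lam) ^ 2 * a ^ 2 - lam ^ 2 * a0 ^ 2)) /\
      rho2b2 0 s = lam * a0 / (mu * ((1 - lam) ^ 2 * a ^ 2 - lam ^ 2 * a0 ^ 2)) /\
      rho s = -2 * (1 - lam) * a / (mu * ((1 - lam) ^ 2 * a ^ 2 - lam ^ 2 * a0 ^ 2)).
Proof.
  intros Hmu Hlam Hc Ha0 Ha.
  set (D := (1 - lam) ^ 2 * a ^ 2 - lam ^ 2 * a0 ^ 2).
  assert (HD : D < 0).
  { assert (D = ((1-lam)*a - lam*a0) * ((1 - lam) * a + lam * a0)) by (unfold D; ring).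
    assert (0 < (1-lam)*a - lam*a0) by nra. rewrite H. nra. }
  assert (HmD : mu * D < 0) by nra.
  set (Rr := lam * a0 / (mu * D)).
  set (p := - (1 - lam) * a / (mu * D)).
  assert (HmD0 : mu * D <> 0) by lra.
  assert (Hp : 0 < p).
  { unfold p. replace (- (1 - lam) * a / (mu * D)) with (((1-lam)*a) / (-(mu*D))) by (field; lra).
    apply Rdiv_lt_0_compat; nra. }
  assert (HRp : p < Rr).
  { assert (Rr - p = (- ((1 - lam) * a + lam * a0)) / (-(mu*D))) by (unfold Rr, p; field; lra).
    assert (0 < (- ((1 - lam) * a + lam * a0)) / (-(mu*D))) by (apply Rdiv_lt_0_compat; nra).
    lra. }
  assert (HR0 : 0 < Rr) by lra.
  set (q := sqrt (Rr * Rr - p * p)).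
  assert (Hq : q * q = Rr * Rr - p * p).
  { unfold q. apply sqrt_sqrt. nra. }
  set (al := mu * lam * a0 / Rr).
  assert (E1 : mu * (1 - lam) * a + al * p = 0).
  { unfold al, p, Rr. field. split; [lra|]. split; [|lra]. nra. }
  assert (E2 : mu * (1 - lam) * a * p + al * (Rr * Rr) + 1 = 0).
  { assert (lam * a0 <> 0) by nra. assert (D <> 0) by lra.
    unfold al, p, Rr. unfold D in *. field. split; [lra|]. split; [lra|]. lra. }
  set (s := mkS (mkV p q 0) (mkV (- p) q 0) (mkV 0 0 1) (mkV 0 0 1)).
  assert (Hrho : rho s = 2 * p).
  { unfold rho, vnorm, rrel, vdot, vsub; simpl.
    replace ((p - - p) * (p - - p) + (q - q) * (q - q) + (0 - 0) * (0 - 0)) with ((2*p)*(2*p)) by ring.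
    apply sqrt_sq''; lra. }
  assert (Hr1 : rho1b1 0 s = Rr).
  { unfold rho1b1, vnorm, r1b1, rb1, vdot, vsub; simpl.
    replace ((p - 0) * (p - 0) + (q - 0) * (q - 0) + (0 - - 0) * (0 - - 0)) with (Rr*Rr) by (transitivity (p*p+q*q); [rewrite Hq; ring | ring]).
    apply sqrt_sq''; lra. }
  assert (Hr2 : rho2b2 0 s = Rr).
  { unfold rho2b2, vnorm, r2b2, rb2, vdot, vsub; simpl.
    replace ((- p - 0) * (- p - 0) + (q - 0) * (q - 0) + (0 - 0) * (0 - 0)) with (Rr*Rr) by (transitivity (p*p+q*q); [rewrite Hq; ring | ring]).
    apply sqrt_sq''; lra. }
  assert (Hb1 : barx1 s = 0).
  { unfold barx1. match goal with |- ?n / _ = 0 => replace n with 0 by (unfold vdot, rrel, vsub; simpl; ring) end.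
    unfold Rdiv; ring. }
  assert (Hb2 : barx2 s = 0).
  { unfold barx2. match goal with |- - ?n / _ = 0 => replace n with 0 by (unfold vdot, rrel, vsub; simpl; ring) end.
    unfold Rdiv; ring. }
  assert (Hb1b : barx1b1 0 s = 0).
  { unfold barx1b1. match goal with |- ?n / _ = 0 => replace n with 0 by (unfold vdot, r1b1, rb1, vsub; simpl; ring) end.
    unfold Rdiv; ring. }
  assert (Hb2b : barx2b2 0 s = 0).
  { unfold barx2b2. match goal with |- ?n / _ = 0 => replace n with 0 by (unfold vdot, r2b2, rb2, vsub; simpl; ring) end.
    unfold Rdiv; ring. }
  exists s.
  set (F := field mu lam a a0 0 s).
  assert (HF1 : sx1 F = mkV (mu * (1 - lam) * a + al * p) (al * q) 0).
  { unfold F, field, xdot1; simpl sx1. rewrite Hb1, Hb1b, Hrho, Hr1.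
    unfold vadd, vscale, vsub, rrel, r1b1, rb1, al; simpl. f_equal; field; lra. }
  assert (HF2 : sx2 F = mkV (- (mu * (1 - lam) * a) - al * p) (al * q) 0).
  { unfold F, field, xdot2; simpl sx2. rewrite Hb2, Hb2b, Hrho, Hr2.
    unfold vadd, vscale, vsub, rrel, r2b2, rb2, al; simpl. f_equal; field; lra. }
  assert (HFr : rrel F = vsub (sx1 s) (sx2 s)) by reflexivity.
  assert (HF1r : sr1 F = sx1 s) by reflexivity.
  assert (HF2r : sr2 F = sx2 s) by reflexivity.
  split.
  - unfold circling_equilibrium. split; [|split; [|split; [|split; [|split]]]].
    + unfold vnorm, vdot; simpl. replace (0 * 0 + 0 * 0 + 1 * 1) with 1 by ring. apply sqrt_1.
    + unfold vnorm, vdot; simpl. replace (0 * 0 + 0 * 0 + 1 * 1) with 1 by ring. apply sqrt_1.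
    + lra.
    + lra.
    + lra.
    + unfold shape_vars; repeat constructor; unfold time_deriv_zero.
      * unfold barx1, rho. apply (td_q s F sx1 rrel (sx1 F) (rrel F));
          [intro; reflexivity | apply rrel_aff | condB; nra | condB; ring | condB].
        transitivity (2*p*(mu * (1 - lam) * a + al * p)); [ring | rewrite E1; ring].
      * unfold barx2, rho. apply (td_qn s F sx2 rrel (sx2 F) (rrel F));
          [intro; reflexivity | apply rrel_aff | condB; nra | condB; ring | condB].
        transitivity (-2*p*(mu * (1 - lam) * a + al * p)); [ring | rewrite E1; ring].
      * unfold barx1b1, rho1b1. apply (td_q s F sx1 (r1b1 0) (sx1 F) (sr1 F));
          [intro; reflexivity | apply r1b1_aff | condB; nra | condB; ring | condB].
        transitivity (al * (q * q - (Rr * Rr - p * p)) + (mu * (1 - lam) * a * p + al * (Rr * Rr) + 1));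
          [ring | rewrite E2, Hq; ring].
      * unfold barx2b2, rho2b2. apply (td_q s F sx2 (r2b2 0) (sx2 F) (sr2 F));
          [intro; reflexivity | apply r2b2_aff | condB; nra | condB; ring | condB].
        transitivity (al * (q * q - (Rr * Rr - p * p)) + (mu * (1 - lam) * a * p + al * (Rr * Rr) + 1));
          [ring | rewrite E2, Hq; ring].
      * unfold tildex. apply (td_d s F). condB; ring.
      * unfold rho. apply (td_n s F rrel (rrel F)); [apply rrel_aff | condB; nra | condB; ring].
      * unfold rho1b1. apply (td_n s F (r1b1 0) (sr1 F)); [apply r1b1_aff | condB; nra | condB; ring].
      * unfold rho2b2. apply (td_n s F (r2b2 0) (sr2 F)); [apply r2b2_aff | condB; nra | condB; ring].
      * unfold hatr1. apply (td_hat s F sr1).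
      * unfold hatr2. apply (td_hat s F sr2).
      * unfold hatx1. apply (td_hat s F sx1).
      * unfold hatx2. apply (td_hat s F sx2).
  - repeat split; try assumption. unfold tildex, vdot; simpl; ring. rewrite Hrho. unfold p. field. split; lra.
Qed.

Theorem proposition4p2 (mu lam a a0 : R) :
  0 < mu -> 0 < lam < 1 -> -1 <= a <= 1 -> -1 <= a0 <= 1 -> a0 <> 0 ->
  ( (1 - lam) * a + lam * a0 < 0 ->
    exists s : State, circling_equilibrium mu lam a a0 0 s /\
      barx1 s = 0 /\ barx2 s = 0 /\ barx1b1 0 s = 0 /\ barx2b2 0 s = 0 /\
      tildex s = -1 /\
      rho1b1 0 s = 1 / (- mu * ((1 - lam) * a + lam * a0)) /\
      rho2b2 0 s = 1 / (- mu * ((1 - lam) * a + lam * a0)) /\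
      rho s = 2 * rho1b1 0 s )
  /\
  ( (1 - lam) * a + lam * a0 < 0 -> a0 < 0 -> 0 < a ->
    exists s : State, circling_equilibrium mu lam a a0 0 s /\
      barx1 s = 0 /\ barx2 s = 0 /\ barx1b1 0 s = 0 /\ barx2b2 0 s = 0 /\
      tildex s = 1 /\
      rho1b1 0 s = lam * a0 / (mu * ((1 - lam) ^ 2 * a ^ 2 - lam ^ 2 * a0 ^ 2)) /\
      rho2b2 0 s = lam * a0 / (mu * ((1 - lam) ^ 2 * a ^ 2 - lam ^ 2 * a0 ^ 2)) /\
      rho s = -2 * (1 - lam) * a / (mu * ((1 - lam) ^ 2 * a ^ 2 - lam ^ 2 * a0 ^ 2)) ).
Proof.
  intros Hmu Hlam Ha Ha0 Ha00. split.
  - intros Hc. apply caseA; assumption.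
  - intros Hc H1 H2. apply caseB; assumption.
Qed.
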